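(* Consider a problem with $m=2$ worker nodes and a DPM algorithm as described in the context. If the odd-even preserving property holds, then the output solution $x^t$ generated by the DPM algorithm after $t$ communication rounds satisfies $x^t\in K_{\lceil t/2\rceil+2}$.
   Context: Problem data: $X\subseteq\mathbb{R}^n$, $u$, and for worker $i$ a matrix $A_i$, set $\Pi_i$ and function $f_i^*$ (with $f_i(x)=\max_{\pi_i\in\Pi_i}\langle A_ix,\pi_i\rangle-f_i^*(\pi_i)$). A DPM (distributed prox mapping) algorithm maintains a server memory $\mathcal M_s^t$, and for each worker $i$ a primal memory $\mathcal M_i^t$ and a dual memory $\mathcal M_i^{\pi,t}$, all equal to $\{0\}$ at $t=0$. In round $t\ge1$: $\mathcal M_s^t=\mathcal M_s^{t,cp}\cup\mathcal M_s^{t,cm}$, $\mathcal M_i^t=\mathcal M_i^{t,cp}\cup\mathcal M_i^{t,cm}$, $\mathcal M_i^{\pi,t}=\mathcal M_i^{\pi,t,cp}$, where: (communication) $\mathcal M_s^{t,cm}=\{y_i:i\in[m]\}$ with $y_i\in\mathrm{span}(\mathcal M_i^{t-1})$, and $\mathcal M_i^{t,cm}$ consists of one vector in $\mathrm{span}(\mathcal M_s^{t-1})$; (worker computation) starting from $\mathcal M_i^{t,0}=\mathcal M_i^{t-1}$, $\mathcal M_i^{\pi,t,0}=\mathcal M_i^{\pi,t-1}$, for $l=1,\dots,L$ ($L\ge0$ arbitrary) pick $\bar x\in\mathrm{span}(\mathcal M_i^{t,l-1})$, $\bar\pi_i\in\mathrm{span}(\mathcal M_i^{\pi,t,l-1})$,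 $\tau\ge0$, and $\pi_i^{t,l}\in\arg\max_{\pi_i\in\Pi_i}\langle A_i\bar x,\pi_i\rangle-f_i^*(\pi_i)-\frac\tau2\|\pi_i-\bar\pi_i\|^2$, and set $\mathcal M_i^{t,l}=\mathcal M_i^{t,l-1}\cup\{A_i^\top\pi_i^{t,l},A_i^\top\bar\pi_i\}$, $\mathcal M_i^{\pi,t,l}=\mathcal M_i^{\pi,t,l-1}\cup\{\pi_i^{t,l},A_i\bar x\}$; then $\mathcal M_i^{t,cp}=\mathcal M_i^{t,L}$, $\mathcal M_i^{\pi,t,cp}=\mathcal M_i^{\pi,t,L}$; (server computation) starting from $\mathcal M_s^{t,0}=\mathcal M_s^{t-1}$, for $l=1,\dots,L$ pick $\bar x\in\mathrm{span}(\mathcal M_s^{t,l-1})$, $\eta>0$, and add $x_s^l=\arg\min_{x\in X}u(x)+\frac\eta2\|x-\bar x\|^2$; $\mathcal M_s^{t,cp}=\mathcal M_s^{t,L}$. The output after $t$ rounds is some $x^t\in\mathrm{span}(\bigcup_i\mathcal M_i^t\cup\mathcal M_s^t)$. Let $K_j=\{x\in\mathbb{R}^n:x_l=0\ \forall l>j\}$. With two workers, the problem is odd-even preserving if for any DPM algorithm: $\mathcal M_1^0\cup\mathcal M_2^0\cup\mathcal M_s^0\subset K_2$; for every $i\ge2$ and $t\ge1$: if $\mathcal M_1^{t-1}\subset K_i$ then $\mathcal M_1^{t,cp}\subset K_i$ when $i$ is even and $\mathcal M_1^{t,cp}\subset K_{i+1}$ when $i$ is odd; if $\mathcal M_2^{t-1}\subset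 K_i$ then $\mathcal M_2^{t,cp}\subset K_{i+1}$ when $i$ is even and $\mathcal M_2^{t,cp}\subset K_i$ when $i$ is odd; and if $\mathcal M_s^{t-1}\subset K_i$ then $\mathcal M_s^{t,cp}\subset K_i$. *)

(* Defs.v *)
From HB Require Import structures.
From mathcomp Require Import all_boot all_order all_algebra.
From mathcomp Require Import boolp classical_sets reals.
Unset Printing Implicit Defensive.
Import Order.TTheory GRing.Theory Num.Theory.
Local Open Scope ring_scope.
Local Open Scope classical_set_scope.

Definition dotv {R : realType} {k : nat} (x y : 'cV[R]_k) : R :=
  \sum_(j < k) x j 0 * y j 0.
Definition sqnorm {R : realType} {k : nat} (x : 'cV[R]_k) : R := dotv x x.

(* Linear span of an arbitrary set of vectors: all vectors lying in the span
   of some finite list of its elements (span of the empty set is {0}). *)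
Definition span {R : realType} {k : nat} (S : set 'cV[R]_k) : set 'cV[R]_k :=
  [set v | exists s : seq 'cV[R]_k, (forall w, w \in s -> S w) /\ v \in <<s>>%VS].

(* K_j = { x in R^n : x_l = 0 for all l > j }, coordinates numbered 1..n in
   the paper; the 0-based coordinate l : 'I_n is the paper's l+1. *)
Definition Kset (R : realType) (n : nat) (j : nat) : set 'cV[R]_n :=
  [set x | forall l : 'I_n, (j <= l)%N -> x l 0 = 0].

Definition is_argmax {R : realType} {T : Type} (D : set T) (g : T -> R) (x : T) :=
  D x /\ forall y, D y -> g y <= g x.
Definition is_argmin {R : realType} {T : Type} (D : set T) (g : T -> R) (x : T) :=
  D x /\ forall y, D y -> g x <= g y.

Record problem (R : realType) (n m : nat) := Problem {
  pX : set 'cV[R]_n;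
  pu : 'cV[R]_n -> R;
  pdim : 'I_m -> nat;
  pA : forall i : 'I_m, 'M[R]_(pdim i, n);
  pPi : forall i : 'I_m, set 'cV[R]_(pdim i);
  pfstar : forall i : 'I_m, 'cV[R]_(pdim i) -> R }.
Arguments pX {R n m}. Arguments pu {R n m}. Arguments pdim {R n m}.
Arguments pA {R n m}. Arguments pPi {R n m}. Arguments pfstar {R n m}.

(* A DPM algorithm (one run of it) for problem P.  Round t+1 of the paper is
   index t.+1 here; the number of computation steps L may depend on the
   round and on the node. *)
Record DPM (R : realType) (n m : nat) (P : problem R n m) := MkDPM {
  Ms : nat -> set 'cV[R]_n;
  Mw : 'I_m -> nat -> set 'cV[R]_n;
  Mpi : forall i : 'I_m, nat -> set 'cV[R]_(pdim P i);
  Ms_cp : nat -> set 'cV[R]_n;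
  Ms_cm : nat -> set 'cV[R]_n;
  Mw_cp : 'I_m -> nat -> set 'cV[R]_n;
  Mw_cm : 'I_m -> nat -> set 'cV[R]_n;
  Mpi_cp : forall i : 'I_m, nat -> set 'cV[R]_(pdim P i);
  Ls : nat -> nat;
  Lw : 'I_m -> nat -> nat;
  Ms_st : nat -> nat -> set 'cV[R]_n;
  Mw_st : 'I_m -> nat -> nat -> set 'cV[R]_n;
  Mpi_st : forall i : 'I_m, nat -> nat -> set 'cV[R]_(pdim P i);
  xout : nat -> 'cV[R]_n;
  Ms_init : Ms 0 = [set 0];
  Mw_init : forall i : 'I_m, Mw i 0 = [set 0];
  Mpi_init : forall i : 'I_m, Mpi i 0 = [set 0];
  Ms_round : forall t, Ms t.+1 = Ms_cp t.+1 `|` Ms_cm t.+1;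
  Mw_round : forall (i : 'I_m) (t : nat), Mw i t.+1 = Mw_cp i t.+1 `|` Mw_cm i t.+1;
  Mpi_round : forall (i : 'I_m) (t : nat), Mpi i t.+1 = Mpi_cp i t.+1;
  Ms_comm : forall t, exists y : 'I_m -> 'cV[R]_n,
      (forall i, span (Mw i t) (y i)) /\ Ms_cm t.+1 = range y;
  Mw_comm : forall (i : 'I_m) (t : nat), exists z : 'cV[R]_n,
      span (Ms t) z /\ Mw_cm i t.+1 = [set z];
  Mw_st0 : forall (i : 'I_m) (t : nat), Mw_st i t.+1 0 = Mw i t;
  Mpi_st0 : forall (i : 'I_m) (t : nat), Mpi_st i t.+1 0 = Mpi i t;
  w_step : forall (i : 'I_m) (t l : nat), (l < Lw i t.+1)%N ->
    exists (xbar : 'cV[R]_n) (pibar pinew : 'cV[R]_(pdim P i)) (tau : R),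
      [/\ span (Mw_st i t.+1 l) xbar, span (Mpi_st i t.+1 l) pibar, 0 <= tau,
          is_argmax (pPi P i)
            (fun p => dotv (pA P i *m xbar) p - pfstar P i p
                      - tau / 2 * sqnorm (p - pibar)) pinew &
          Mw_st i t.+1 l.+1 = Mw_st i t.+1 l
              `|` [set (pA P i)^T *m pinew] `|` [set (pA P i)^T *m pibar] /\
          Mpi_st i t.+1 l.+1 = Mpi_st i t.+1 l
              `|` [set pinew] `|` [set pA P i *m xbar]];
  Mw_cpE : forall (i : 'I_m) (t : nat), Mw_cp i t.+1 = Mw_st i t.+1 (Lw i t.+1);
  Mpi_cpE : forall (i : 'I_m) (t : nat), Mpi_cp i t.+1 = Mpi_st i t.+1 (Lw i t.+1);
  Ms_st0 : forall t, Ms_st t.+1 0 = Ms t;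
  s_step : forall t l, (l < Ls t.+1)%N ->
    exists (xbar xs : 'cV[R]_n) (eta : R),
      [/\ span (Ms_st t.+1 l) xbar, 0 < eta,
          is_argmin (pX P) (fun x => pu P x + eta / 2 * sqnorm (x - xbar)) xs &
          Ms_st t.+1 l.+1 = Ms_st t.+1 l `|` [set xs]];
  Ms_cpE : forall t, Ms_cp t.+1 = Ms_st t.+1 (Ls t.+1);
  xout_span : forall t, span ((\bigcup_i Mw i t) `|` Ms t) (xout t)
}.
Arguments Ms {R n m P}.
Arguments Mw {R n m P}.
Arguments Mpi {R n m P}.
Arguments Ms_cp {R n m P}.
Arguments Ms_cm {R n m P}.
Arguments Mw_cp {R n m P}.
Arguments Mw_cm {R n m P}.
Arguments Mpi_cp {R n m P}.
Arguments Ls {R n m P}.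
Arguments Lw {R n m P}.
Arguments Ms_st {R n m P}.
Arguments Mw_st {R n m P}.
Arguments Mpi_st {R n m P}.
Arguments xout {R n m P}.
Arguments DPM {R n m}.

(* Odd-even preserving property for two workers (worker 1 = ord0,
   worker 2 = ord_max). *)
Definition odd_even_preserving {R : realType} {n : nat} (P : problem R n 2) :=
  forall D : DPM P,
    (Mw D ord0 0 `|` Mw D ord_max 0 `|` Ms D 0) `<=` Kset R n 2 /\
    forall j t : nat, (2 <= j)%N -> (1 <= t)%N ->
      [/\ (Mw D ord0 t.-1 `<=` Kset R n j ->
            Mw_cp D ord0 t `<=` Kset R n (if ~~ odd j then j else j.+1)),
          (Mw D ord_max t.-1 `<=` Kset R n j ->
            Mw_cp D ord_max t `<=` Kset R n (if ~~ odd j then j.+1 else j)) &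
          (Ms D t.-1 `<=` Kset R n j -> Ms_cp D t `<=` Kset R n j)].

(* Main.v *)
Require Import Defs.
From HB Require Import structures.
From mathcomp Require Import all_boot all_order all_algebra.
From mathcomp Require Import boolp classical_sets reals.
From mathcomp Require Import zify.
Import Order.TTheory GRing.Theory Num.Theory.
Local Open Scope ring_scope.
Local Open Scope classical_set_scope.

Lemma Kmono (R : realType) n j j' : (j <= j')%N -> Kset R n j `<=` Kset R n j'.
Proof. move=> h x Hx l hl; apply: Hx; exact: leq_trans h hl. Qed.

Lemma K0 (R : realType) n j : Kset R n j 0.
Proof. by move=> l _; rewrite mxE. Qed.

Lemma KD (R : realType) n j x y : Kset R n j x -> Kset R n j y -> Kset R n j (x + y).
Proof. by move=> hx hy l hl; rewrite mxE hx // hy // addr0. Qed.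

Lemma KZ (R : realType) n j (k : R) x : Kset R n j x -> Kset R n j (k *: x).
Proof. by move=> hx l hl; rewrite mxE hx // mulr0. Qed.

Lemma span_K (R : realType) n j (S : set 'cV[R]_n) :
  S `<=` Kset R n j -> Defs.span S `<=` Kset R n j.
Proof.
move=> HS v [s [Hs Hv]]; elim: s v Hs Hv => [|x s IH] v Hs.
  by rewrite span_nil memv0 => /eqP ->; exact: K0.
rewrite span_cons => /memv_addP [y /vlineP [k ->] [z Hz ->]].
apply: KD; first by apply: KZ; apply: HS; apply: Hs; exact: mem_head.
by apply: IH Hz => w hw; apply: Hs; rewrite in_cons hw orbT.
Qed.

Lemma I2 (i : 'I_2) : i = ord0 \/ i = ord_max.
Proof.
case: i => [[|[|k]] Hi]; [left|right|by []]; exact/val_inj.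
Qed.

Lemma step (R : realType) n (P : problem R n 2) (H : odd_even_preserving P)
  (D : DPM P) t a b c a' b' c' :
  (2 <= a)%N -> (2 <= b)%N -> (2 <= c)%N ->
  Mw D ord0 t `<=` Kset R n a -> Mw D ord_max t `<=` Kset R n b ->
  Ms D t `<=` Kset R n c ->
  ((if ~~ odd a then a else a.+1) <= a')%N -> (c <= a')%N ->
  ((if ~~ odd b then b.+1 else b) <= b')%N -> (c <= b')%N ->
  (c <= c')%N -> (a <= c')%N -> (b <= c')%N ->
  [/\ Mw D ord0 t.+1 `<=` Kset R n a', Mw D ord_max t.+1 `<=` Kset R n b'
    & Ms D t.+1 `<=` Kset R n c'].
Proof.
move=> ha hb hc H1 H2 H3 e1 e2 e3 e4 e5 e6 e7.
have [_ Hp] := H D.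
have [A1 _ _] := Hp a t.+1 ha erefl.
have [_ A2 _] := Hp b t.+1 hb erefl.
have [_ _ A3] := Hp c t.+1 hc erefl.
split.
- rewrite Mw_round => x [Hx|Hx].
  + exact: Kmono e1 _ (A1 H1 x Hx).
  + have [z [Hz Ez]] := @Mw_comm _ _ _ _ D ord0 t.
    move: Hx; rewrite Ez => ->; apply: Kmono e2 _ _; exact: span_K H3 _ Hz.
- rewrite Mw_round => x [Hx|Hx].
  + exact: Kmono e3 _ (A2 H2 x Hx).
  + have [z [Hz Ez]] := @Mw_comm _ _ _ _ D ord_max t.
    move: Hx; rewrite Ez => ->; apply: Kmono e4 _ _; exact: span_K H3 _ Hz.
- rewrite Ms_round => x [Hx|Hx].
  + exact: Kmono e5 _ (A3 H3 x Hx).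
  + have [y [Hy Ey]] := @Ms_comm _ _ _ _ D t.
    move: Hx; rewrite Ey => -[i _ <-].
    case: (I2 i) => ->.
    * apply: Kmono e6 _ _; exact: span_K H1 _ (Hy _).
    * apply: Kmono e7 _ _; exact: span_K H2 _ (Hy _).
Qed.

Ltac sc oj := (rewrite /= ?oj /=; lia).

Lemma even_inv (R : realType) n (P : problem R n 2) (H : odd_even_preserving P)
  (D : DPM P) k :
  [/\ Mw D ord0 k.*2 `<=` Kset R n (k + 2), Mw D ord_max k.*2 `<=` Kset R n (k + 2)
    & Ms D k.*2 `<=` Kset R n (k + 2)].
Proof.
elim: k => [|k [H1 H2 H3]].
  have [H0 _] := H D.
  by split=> x Hx; apply: H0; [left; left|left; right|right].
set j := (k + 2)%N in H1 H2 H3 *.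
have hj : (2 <= j)%N by rewrite /j; lia.
have -> : (k.+1 + 2 = j.+1)%N by rewrite /j; lia.
rewrite doubleS.
case oj: (odd j).
- have [B1 B2 B3] := @step _ _ _ H D _ _ _ _ (j.+1) (j) (j)
     hj hj hj H1 H2 H3 ltac:(sc oj) ltac:(sc oj) ltac:(sc oj) ltac:(sc oj) ltac:(sc oj) ltac:(sc oj) ltac:(sc oj).
  have hj1 : (2 <= j.+1)%N by lia.
  have [C1 C2 C3] := @step _ _ _ H D _ _ _ _ (j.+1) (j.+1) (j.+1)
     hj1 hj hj B1 B2 B3 ltac:(sc oj) ltac:(sc oj) ltac:(sc oj) ltac:(sc oj) ltac:(sc oj) ltac:(sc oj) ltac:(sc oj).
  by split.
- have [B1 B2 B3] := @step _ _ _ H D _ _ _ _ (j) (j.+1) (j)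
     hj hj hj H1 H2 H3 ltac:(sc oj) ltac:(sc oj) ltac:(sc oj) ltac:(sc oj) ltac:(sc oj) ltac:(sc oj) ltac:(sc oj).
  have hj1 : (2 <= j.+1)%N by lia.
  have [C1 C2 C3] := @step _ _ _ H D _ _ _ _ (j.+1) (j.+1) (j.+1)
     hj hj1 hj B1 B2 B3 ltac:(sc oj) ltac:(sc oj) ltac:(sc oj) ltac:(sc oj) ltac:(sc oj) ltac:(sc oj) ltac:(sc oj).
  by split.
Qed.

Lemma out_K (R : realType) n (P : problem R n 2) (D : DPM P) t j :
  Mw D ord0 t `<=` Kset R n j -> Mw D ord_max t `<=` Kset R n j ->
  Ms D t `<=` Kset R n j -> Kset R n j (xout D t).
Proof.
move=> H1 H2 H3; apply: (@span_K R n j _ _ (xout D t) (@xout_span _ _ _ _ D t)).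
move=> x [[i _ Hx]|Hx]; last exact: H3.
by case: (I2 i) Hx => -> Hx; [apply: H1|apply: H2].
Qed.

(* ceil(t/2) = t.+1./2 *)
Theorem lemma5p1 (R : realType) (n : nat) (P : problem R n 2) :
  odd_even_preserving P ->
  forall (D : DPM P) (t : nat), Kset R n ((t.+1)./2 + 2) (xout D t).
Proof.
move=> H D t.
rewrite -[t](odd_double_half t).
set k := t./2.
have [H1 H2 H3] := @even_inv _ _ _ H D k.
case: (odd t) => /=.
- match goal with |- Kset _ _ ?e _ => have -> : e = (k+2).+1 end.
    by rewrite add0n doubleK; lia.
  have hk : (2 <= k + 2)%N by lia.
  have [B1 B2 B3] := @step _ _ _ H D _ _ _ _ (k+2).+1 (k+2).+1 (k+2).+1
     hk hk hk H1 H2 H3 ltac:(case: ifP => _; lia) ltac:(lia) ltac:(case: ifP => _; lia) ltac:(lia) ltac:(lia) ltac:(lia) ltac:(lia).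
  rewrite add1n; exact: out_K B1 B2 B3.
- rewrite add0n uphalf_double.
  exact: out_K H1 H2 H3.
Qed.
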